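(* Let $n\geqslant 2$ and $d\geqslant 1$ be integers. Let $\mathfrak{ut}_n(\mathbb{C})$ be the Lie algebra of upper triangular complex $n\times n$ matrices with basis $\{E_{ij}\mid 1\leqslant i\leqslant j\leqslant n\}$, and assign the variable $x_i$ to $E_{ii}$ ($1\leqslant i\leqslant n$) and the variable $x_{ij}$ to $E_{ij}$ ($1\leqslant i<j\leqslant n$). Then the coefficient algebra of $\mathfrak{ut}_n(\mathbb{C})$ on $S^d(\mathbb{C}^n)$ with respect to this basis, a subalgebra of $\mathbb{C}[x_i,x_{ij}]$, is equal to the ring of symmetric polynomials $\mathbb{C}[x_1,\dots,x_n]^{S_n}$ in the diagonal variables, where $S_n$ permutes $x_1,\dots,x_n$. In particular it is isomorphic to $\mathbb{C}[x_1,\dots,x_n]^{S_n}$.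
   Context: Let $\mathfrak{g}$ be a finite-dimensional Lie algebra over a field $k$ with a fixed basis $\{g_1,\dots,g_N\}$, and $V$ an $m$-dimensional representation; write $[g]$ for the matrix of $g\in\mathfrak g$ acting on $V$ (in any basis of $V$). The characteristic polynomial of $\mathfrak g$ on $V$ is $\varphi_{\mathfrak g}(V)=\det(x_0 I+x_1[g_1]+\cdots+x_N[g_N])$, a polynomial in variables $x_0,\dots,x_N$ (one variable $x_0$ for the identity and one for each basis element). Writing $\varphi_{\mathfrak g}(V)=x_0^m+c_1x_0^{m-1}+\cdots+c_m$ with $c_i\in k[x_1,\dots,x_N]$, the coefficient algebra $B_{\mathfrak g}(V)$ is the $k$-subalgebra $k[c_1,\dots,c_m]$ of $k[x_1,\dots,x_N]$. Here $E_{ij}$ is the matrix unit with $1$ in position $(i,j)$ and $0$ elsewhere. $\mathbb{C}^n$ is the standard representation of $\mathfrak{gl}_n(\mathbb{C})$ (and of its subalgebras) with standard basis $e_1,\dots,e_n$, and $S^d(\mathbb{C}^n)$ is its $d$-th symmetric power, on which $g$ acts as a derivation: $g\cdot(e_{i_1}\cdots e_{i_d})=\sum_{s=1}^d e_{i_1}\cdots g(e_{i_s})\cdots e_{i_d}$. *)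

(* Defs.v *)
From HB Require Import structures.
From mathcomp Require Import all_boot all_order all_algebra.
From mathcomp Require Import mpoly.
Set Implicit Arguments. Unset Strict Implicit. Unset Printing Implicit Defensive.
Import GRing.Theory.
Local Open Scope ring_scope.

Section Defs.
Variable C : numClosedFieldType.

(* A Lie algebra with basis given as matrices B k (k < N) acting on an
   m-dimensional representation.  Variables x_1..x_N are 'X_k of
   {mpoly C[N]}; the extra variable x_0 is the variable 'X of the outer
   univariate polynomial ring, so
   phi = det(x_0 I + sum_k x_k [B k]) in (C[x_1..x_N])[x_0]. *)
Definition lie_charpoly (m N : nat) (B : 'I_N -> 'M[C]_m) : {poly {mpoly C[N]}} :=
  \det ('X%:M + map_mx polyC
          (\sum_(k < N) 'X_k *: map_mx (fun c : C => c%:MP) (B k))).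

(* c_i = coefficient of x_0^(m-i), for i = 1..m; index i : 'I_m stands for i+1 *)
Definition lie_coeffs (m N : nat) (B : 'I_N -> 'M[C]_m) : m.-tuple {mpoly C[N]} :=
  [tuple (lie_charpoly B)`_((m - i.+1)%N) | i < m].

Definition coeff_algebra (m N : nat) (B : 'I_N -> 'M[C]_m) : {mpoly C[N]} -> Prop :=
  fun p => exists P : {mpoly C[m]}, p = comp_mpoly (lie_coeffs B) P.

(* S^d(C^n) realised as homogeneous degree-d polynomials in e_1..e_n
   ('X_i of {mpoly C[n]}), with basis the monomials of degree d. *)
Notation Sd_index n d := {mo : 'X_{1..n < d.+1} | (mdeg mo == d)%N}.
Definition Sd_dim (n d : nat) := #|{: Sd_index n d}|.

(* g acts as the derivation with g(e_l) = sum_k g_{kl} e_k *)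
Definition Sd_act (n : nat) (g : 'M[C]_n) (p : {mpoly C[n]}) : {mpoly C[n]} :=
  \sum_(k < n) \sum_(l < n) g k l *: ('X_k * p^`M(l)).

Definition Sd_mx (n d : nat) (g : 'M[C]_n) : 'M[C]_(Sd_dim n d) :=
  \matrix_(a < Sd_dim n d, b < Sd_dim n d)
     (Sd_act g 'X_[(val (@enum_val _ (mem {: Sd_index n d}) b) : 'X_{1..n})])
        @_(val (@enum_val _ (mem {: Sd_index n d}) a) : 'X_{1..n}).

Notation UT_index n := {ij : 'I_n * 'I_n | (ij.1 <= ij.2)%N}.
Definition UT_dim (n : nat) := #|{: UT_index n}|.

Definition UT_basis (n : nat) (k : 'I_(UT_dim n)) : 'M[C]_n :=
  delta_mx (val (@enum_val _ (mem {: UT_index n}) k)).1 (val (@enum_val _ (mem {: UT_index n}) k)).2.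

Definition UT_diagvar (n : nat) (i : 'I_n) : {mpoly C[UT_dim n]} :=
  'X_(@enum_rank (UT_index n) (exist (fun ij : 'I_n * 'I_n => (ij.1 <= ij.2)%N) (i, i) (leqnn i))).

Definition sym_diag (n : nat) : {mpoly C[UT_dim n]} -> Prop :=
  fun p => exists q : {mpoly C[n]},
      q \is symmetric /\ p = comp_mpoly [tuple UT_diagvar i | i < n] q.

End Defs.

(* Main.v *)
Require Import Defs.
From HB Require Import structures.
From mathcomp Require Import all_boot all_order all_algebra.
From mathcomp Require Import mpoly.
From mathcomp Require Import zify ring.
From mathcomp Require Import fingroup perm.
Set Implicit Arguments. Unset Strict Implicit. Unset Printing Implicit Defensive.
Import GRing.Theory Num.Theory.
Local Open Scope ring_scope.

Section Newton.
Variables (R : comRingType) (I : finType) (x : I -> R).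
Definition es k := \sum_(h : {set I} | #|h| == k) \prod_(u in h) x u.
Definition pw k := \sum_(i : I) x i ^+ k.
Definition nA j l := \sum_(h : {set I} | #|h| == l)
   \sum_(i | i \notin h) x i ^+ j * \prod_(u in h) x u.
Definition nB j l := \sum_(h : {set I} | #|h| == l)
   \sum_(i | i \in h) x i ^+ j * \prod_(u in h) x u.

Lemma es_pw j l : es l * pw j = nA j l + nB j l.
Proof.
rewrite /es /pw mulr_suml -big_split /=; apply eq_bigr => h _.
rewrite mulr_sumr (bigID (fun i => i \in h)) /= addrC.
by congr (_ + _); apply eq_bigr => i _; rewrite mulrC.
Qed.

Lemma nB_nA j l : nB j l.+1 = nA j.+1 l.
Proof.
rewrite /nB /nA (exchange_big_dep xpredT) //= [RHS](exchange_big_dep xpredT) //=.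
apply eq_bigr => i _.
rewrite (reindex_onto (fun h => i |: h) (fun h => h :\ i)) /=; last first.
  by move=> h /andP[_ ih]; rewrite setD1K.
apply eq_big => h.
  case hi: (i \in h).
    rewrite /= andbF; apply/negP => /andP[_ /eqP e].
    by have := hi; rewrite -e !inE eqxx.
  by rewrite /= setU1K ?hi // eqxx setU11 cardsU1 hi andbT add1n eqSS.
move=> /andP[/andP[_ _] /eqP e].
have hi : i \notin h by rewrite -e !inE eqxx.
by rewrite big_setU1 // mulrA -exprSr.
Qed.

Lemma nB0 j : nB j 0 = 0.
Proof.
rewrite /nB big1 // => h /eqP /cards0_eq ->; apply: big_pred0 => i; by rewrite in_set0.
Qed.

Lemma nA1 k : nA 1 k = k.+1%:R * es k.+1.
Proof.
rewrite -nB_nA /nB /es mulr_sumr; apply eq_bigr => h /eqP hk.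
have -> : \sum_(i in h) x i ^+ 0 * \prod_(u in h) x u = \sum_(i in h) \prod_(u in h) x u.
  by apply: eq_bigr => i _; rewrite expr0 mul1r.
by rewrite sumr_const hk mulr_natl.
Qed.

Lemma newton k :
  k.+1%:R * es k.+1 = \sum_(i < k.+1) (-1) ^+ i * es (k - i)%N * pw i.+1.
Proof.
pose T := fun i : nat => ((-1) ^+ i * nA i.+1 (k - i)%N : R).
have -> : \sum_(i < k.+1) (-1) ^+ i * es (k - i)%N * pw i.+1
          = \sum_(i < k) (T i - T i.+1) + T k.
  rewrite big_ord_recr /=; congr (_ + _).
    apply eq_bigr => i _.
    rewrite -mulrA es_pw /T; have ik := ltn_ord i.
    have -> : (k - i = (k - i.+1).+1)%N by rewrite subnSK.
    by rewrite nB_nA mulrDr exprS mulN1r mulNr opprK.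
  by rewrite -mulrA es_pw /T subnn nB0 addr0.
rewrite -(big_mkord xpredT (fun i => T i - T i.+1)).
rewrite (eq_bigr (fun i => - (T i.+1 - T i))); last by move=> i _; rewrite opprB.
rewrite sumrN telescope_sumr // opprB subrK /T subn0 expr0 mul1r nA1 //.
Qed.

End Newton.

Section Closure.
Variables (K : comRingType) (n : nat).
Implicit Types (S : {mpoly K[n]} -> Prop).

Definition subalg S :=
  [/\ forall c, S c%:MP, forall x y, S x -> S y -> S (x + y)
    & forall x y, S x -> S y -> S (x * y)].

Lemma subalgZ S c x : subalg S -> S x -> S (c *: x).
Proof. by case=> hC _ hM hx; rewrite -mul_mpolyC; apply: hM. Qed.

Lemma subalgN S x : subalg S -> S x -> S (- x).
Proof. by move=> hS hx; rewrite -scaleN1r; apply: subalgZ. Qed.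

Lemma subalgB S x y : subalg S -> S x -> S y -> S (x - y).
Proof. by move=> hS hx hy; have [_ hD _] := hS; apply: hD => //; apply: subalgN. Qed.

Lemma subalg0 S : subalg S -> S 0.
Proof. by case=> hC _ _; rewrite -mpolyC0. Qed.

Lemma subalg1 S : subalg S -> S 1.
Proof. by case=> hC _ _; rewrite -mpolyC1. Qed.

Lemma subalg_sum S (I : Type) (r : seq I) (P : pred I) F :
  subalg S -> (forall i, P i -> S (F i)) -> S (\sum_(i <- r | P i) F i).
Proof.
move=> hS hF; apply: (big_ind S); [exact: subalg0|by case: hS|exact: hF].
Qed.

Lemma subalg_prod S (I : Type) (r : seq I) (P : pred I) F :
  subalg S -> (forall i, P i -> S (F i)) -> S (\prod_(i <- r | P i) F i).
Proof.
move=> hS hF; apply: (big_ind S); [exact: subalg1|by case: hS|exact: hF].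
Qed.

Lemma subalgX S x k : subalg S -> S x -> S (x ^+ k).
Proof.
move=> hS hx; elim: k => [|k ih]; first by rewrite expr0; apply: subalg1.
by rewrite exprS; case: hS => _ _ hM; apply: hM.
Qed.

Lemma subalg_comp k S (t : k.-tuple {mpoly K[n]}) (P : {mpoly K[k]}) :
  subalg S -> (forall i, S (tnth t i)) -> S (P \mPo t).
Proof.
move=> hS ht; rewrite comp_mpolyE; apply: subalg_sum => // m _.
apply: subalgZ => //; apply: subalg_prod => // i _; exact: subalgX.
Qed.

Definition genalg k (t : k.-tuple {mpoly K[n]}) x :=
  exists P : {mpoly K[k]}, x = P \mPo t.

Lemma genalg_subalg k (t : k.-tuple {mpoly K[n]}) : subalg (genalg t).
Proof.
split.
- by move=> c; exists c%:MP; rewrite comp_mpolyC.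
- by move=> x y [P ->] [Q ->]; exists (P + Q); rewrite rmorphD.
- by move=> x y [P ->] [Q ->]; exists (P * Q); rewrite rmorphM.
Qed.

Lemma genalg_gen k (t : k.-tuple {mpoly K[n]}) i : genalg t (tnth t i).
Proof. by exists 'X_i; rewrite comp_mpolyXU -tnth_nth. Qed.

End Closure.

Section Core.
Variables (C : numClosedFieldType) (n d : nat).
Local Notation P := {mpoly C[n]}.
Local Notation BM := ('X_{1..n < d.+1}).

Definition lin (a : 'X_{1..n}) : P := \sum_(i < n) (a i)%:R *: 'X_i.
Definition psum k : P := \sum_(i < n) 'X_i ^+ k.
Definition Qs e k : P := \sum_(a : BM | mdeg a == e) lin a ^+ k.

Lemma linD a b : lin (a + b)%MM = lin a + lin b.
Proof.
by rewrite /lin -big_split; apply eq_bigr => i _; rewrite mnmDE natrD scalerDl.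
Qed.

Lemma linU i r : lin (U_(i) *+ r)%MM = r%:R *: 'X_i.
Proof.
rewrite /lin (bigD1 i) //= big1 ?addr0 => [|l /negbTE nl].
  by rewrite mulmnE mnm1E eqxx mul1n.
by rewrite mulmnE mnm1E eq_sym nl mul0n scale0r.
Qed.

Lemma reidx e r i (F : 'X_{1..n} -> P) : (r < e)%N -> (e <= d)%N ->
  \sum_(a : BM | (mdeg a == e) && (r < a i)%N) F a =
  \sum_(b : BM | mdeg b == (e - r.+1)%N) F (b + U_(i) *+ r.+1)%MM.
Proof.
move=> re ed.
set u := (U_(i) *+ r.+1)%MM.
have hdu : mdeg u = r.+1 by rewrite mdegMn mdeg1 mul1n.
have ui : u i = r.+1 by rewrite mulmnE mnm1E eqxx mul1n.
pose h (b : BM) : BM := insubd b (b + u)%MM.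
pose h' (a : BM) : BM := insubd a (a - u)%MM.
have vh' (a : BM) : val (h' a) = (a - u)%MM.
  by rewrite /h' insubdK // -topredE /= (leq_ltn_trans (mdegB _ _)) ?bmdeg.
rewrite (reindex_onto h h'); last first.
  move=> a /andP[/eqP ha ria].
  have ua : (u <= a)%MM.
    apply/mnm_lepP => l; rewrite mulmnE mnm1E.
    by case: eqP => [<-|_]; rewrite ?mul1n ?mul0n.
  apply: val_inj; rewrite /h insubdK; first by rewrite vh' submK.
  by rewrite -topredE /= vh' submK //; exact: bmdeg.
have valid (b : BM) : mdeg b == (e - r.+1)%N -> val (h b) = (b + u)%MM.
  move=> /eqP hb; rewrite /h insubdK // -topredE /= mdegD hdu hb subnK //.
have pred_eq : forall b : BM, ((mdeg (h b) == e) && (r < h b i)%N && (h' (h b) == b))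
     = (mdeg b == (e - r.+1)%N).
  move=> b; case hb: (mdeg b == (e - r.+1)%N).
    have vb := valid b hb.
    rewrite vb mdegD hdu (eqP hb) subnK // eqxx /= mnmDE ui addnS ltnS leq_addl /=.
    by apply/eqP/val_inj; rewrite vh' vb addmK.
  case hv: (mdeg b + r.+1 < d.+1)%N.
    have vb : val (h b) = (b + u)%MM by rewrite /h insubdK // -topredE /= mdegD hdu.
    rewrite vb mdegD hdu.
    by case: eqP => //= he; move: hb; rewrite -he addnK eqxx.
  have hbb : h b = b by apply: val_inj; rewrite /h val_insubd /= mdegD hdu hv.
  rewrite hbb; apply/negbTE; apply/negP => /andP[/andP[/eqP he rb] /eqP hh].
  have := congr1 (fun z : BM => (val z) i) hh; rewrite vh' mnmBE ui => hi.
  have hi2 : ((b : 'X_{1..n}) i - r.+1)%N = (b : 'X_{1..n}) i by exact: hi.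
  move: rb hi2; lia.
apply: eq_big => [b|b]; first exact: pred_eq.
by rewrite pred_eq => hb; rewrite (valid b hb).
Qed.

Lemma sum_lt m e : (m <= e)%N -> (\sum_(r < e) ((r < m)%N : nat) = m)%N.
Proof.
move=> me; rewrite -(big_mkord xpredT (fun r => ((r < m)%N : nat))).
rewrite (big_cat_nat (leq0n m) me) /=.
rewrite (eq_big_nat _ _ (F2 := fun=> 1%N)) => [|r /andP[_ ->]//].
rewrite [X in (_ + X)%N](eq_big_nat _ _ (F2 := fun=> 0%N)) => [|r /andP[mr _]]; last by rewrite ltnNge mr.
by rewrite !sum_nat_const_nat muln0 muln1 subn0 addn0.
Qed.

Lemma mnm_le_mdeg (a : 'X_{1..n}) i : (a i <= mdeg a)%N.
Proof. by rewrite mdegE (bigD1 i) //= leq_addr. Qed.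

Lemma Qs_rec e k : (e <= d)%N ->
  e%:R * Qs e k = \sum_(r < e) \sum_(j < k.+1)
      ('C(k, j) * r.+1 ^ j)%:R *: (psum j * Qs (e - r.+1)%N (k - j)%N).
Proof.
move=> ed.
have step1 : e%:R * Qs e k = \sum_(r < e) \sum_(i < n)
     \sum_(a : BM | (mdeg a == e) && (r < a i)%N) lin a ^+ k.
  rewrite /Qs mulr_sumr.
  rewrite (eq_bigr (fun a : BM => \sum_(r < e) \sum_(i < n)
                ((r < a i)%N)%:R * lin a ^+ k)); last first.
    move=> a /eqP ha.
    rewrite exchange_big /=.
    under eq_bigr => i _ do rewrite -mulr_suml.
    rewrite -mulr_suml; congr (_ * _).
    rewrite -{1}ha mdegE natr_sum; apply eq_bigr => i _.
    by rewrite -natr_sum sum_lt // -ha mnm_le_mdeg.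
  rewrite exchange_big /=; apply eq_bigr => r _.
  rewrite exchange_big /=; apply eq_bigr => i _.
  rewrite [RHS]big_mkcondr /=; apply eq_bigr => a _.
  by case: (r < a i)%N; rewrite ?mul1r ?mul0r.
rewrite step1; apply eq_bigr => r _.
rewrite (eq_bigr (fun i : 'I_n => \sum_(b : BM | mdeg b == (e - r.+1)%N)
     \sum_(j < k.+1) ('C(k, j) * r.+1 ^ j)%:R *: ('X_i ^+ j * lin b ^+ (k - j)))); last first.
  move=> i _; rewrite (reidx i (fun a => lin a ^+ k) (ltn_ord r) ed).
  apply eq_bigr => b _; rewrite linD linU exprDn; apply eq_bigr => j _.
  by rewrite exprZn -scalerAr -scaler_nat scalerA -natrX -natrM [lin b ^+ _ * _]mulrC.
under eq_bigr => i _ do rewrite exchange_big /=.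
rewrite exchange_big /=; apply eq_bigr => j _.
rewrite /psum /Qs mulr_suml scaler_sumr; apply eq_bigr => i _.
by rewrite mulr_sumr scaler_sumr.
Qed.

Definition AlgP k (x : P) := forall S : P -> Prop, subalg S ->
  (forall j, (0 < j < k)%N -> S (psum j)) -> S x.

Lemma AlgP_subalg k : subalg (AlgP k).
Proof.
split.
- by move=> c S hS _; case: hS.
- by move=> x y hx hy S hS hp; have [_ hD _] := hS; apply: hD; [apply: hx|apply: hy].
- by move=> x y hx hy S hS hp; have [_ _ hM] := hS; apply: hM; [apply: hx|apply: hy].
Qed.

Lemma AlgP_psum k j : (0 < j < k)%N -> AlgP k (psum j).
Proof. by move=> hj S _ hp; apply: hp. Qed.

Lemma AlgP_mono k k' x : (k <= k')%N -> AlgP k x -> AlgP k' x.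
Proof.
move=> kk hx S hS hp; apply: hx => // j /andP[j0 jk]; apply: hp.
by rewrite j0 (leq_trans jk kk).
Qed.

Lemma AlgP_nat k c : AlgP k c%:R.
Proof. by rewrite -mpolyC_nat; case: (AlgP_subalg k). Qed.

Definition cnt e := #|[pred a : BM | mdeg a == e]|.

Lemma Qs0 e : Qs e 0 = (cnt e)%:R.
Proof.
rewrite /Qs (eq_bigr (fun=> 1)) => [|a _]; last by rewrite expr0.
by rewrite sumr_const.
Qed.

Lemma cnt0 : (0 < cnt 0)%N.
Proof.
apply/card_gt0P; exists (@bm0 n d); by rewrite inE /= mdeg0.
Qed.

Lemma psum0 : psum 0 = n%:R.
Proof.
rewrite /psum (eq_bigr (fun=> 1)) => [|i _]; last by rewrite expr0.
by rewrite sumr_const card_ord.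
Qed.

Lemma Qs_e0 k : Qs 0 k.+1 = 0.
Proof.
rewrite /Qs big1 // => a /eqP ha.
have a0 : (a : 'X_{1..n}) = 0%MM by apply/eqP; rewrite -mdeg_eq0 ha.
rewrite /lin big1 ?expr0n // => i _; by rewrite a0 mnm0E scale0r.
Qed.

Definition lspec e k (l : C) :=
  [/\ 0 <= l, (0 < e)%N -> (0 < k)%N -> 0 < l & AlgP k (Qs e k - l *: psum k)].

Lemma lam_ex e : (e <= d)%N -> forall k, exists l, lspec e k l.
Proof.
elim/ltn_ind: e => e IH ed k.
case: k => [|k].
  exists 0; split => //; rewrite scale0r subr0 Qs0; exact: AlgP_nat.
case: e IH ed => [|e'] IH ed.
  exists 0; split => //; rewrite Qs_e0 scale0r subr0 -(mulr0n 1); exact: AlgP_nat.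
set e := e'.+1.
have IH' : forall r : 'I_e, exists l, lspec (e - r.+1)%N k.+1 l.
  move=> r; apply: IH; first by rewrite /e subSS ltnS leq_subr.
  by apply: leq_trans ed; rewrite leq_subr.
have [f hf] := fin_all_exists IH'.
have mid : forall e1 k1, (e1 < e)%N -> (0 < k1 < k.+1)%N -> AlgP k.+1 (Qs e1 k1).
  move=> e1 k1 e1e /andP[k10 k1k].
  have [l [_ _ hl]] := IH e1 e1e (leq_trans (ltnW e1e) ed) k1.
  have -> : Qs e1 k1 = (Qs e1 k1 - l *: psum k1) + l *: psum k1 by rewrite subrK.
  have [_ hD _] := AlgP_subalg k.+1; apply: (hD _ _ (AlgP_mono (ltnW k1k) hl)).
  by apply: (subalgZ _ (AlgP_subalg k.+1)); apply: AlgP_psum; rewrite k10.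
pose c (r : 'I_e) := n%:R * f r + ('C(k.+1, k.+1) * r.+1 ^ k.+1 * cnt (e - r.+1)%N)%:R.
have ce : (e%:R : C) != 0 by rewrite pnatr_eq0.
exists (e%:R^-1 * \sum_(r < e) c r); split.
- apply: mulr_ge0; first by rewrite invr_ge0 ler0n.
  apply: sumr_ge0 => r _; apply: addr_ge0 => //.
  by apply: mulr_ge0 => //; have [] := hf r.
- move=> _ _; apply: mulr_gt0; first by rewrite invr_gt0 ltr0n.
  rewrite big_ord_recr /=; apply: ltr_wpDl.
    apply: sumr_ge0 => r _; apply: addr_ge0 => //.
    by apply: mulr_ge0 => //; have [] := hf (widen_ord (leqnSn _) r).
  apply: ltr_wpDl; first by apply: mulr_ge0 => //; have [] := hf ord_max.
  by rewrite ltr0n /= subnn !muln_gt0 bin_gt0 leqnn expn_gt0 cnt0.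
have key : AlgP k.+1 (e%:R * Qs e k.+1 - (\sum_(r < e) c r) *: psum k.+1).
  rewrite Qs_rec // scaler_suml -sumrB.
  apply: subalg_sum; first exact: AlgP_subalg.
  move=> r _; rewrite big_ord_recl big_ord_recr /=.
  rewrite /c scalerDl.
  set T0 := (X in X + (_ + _) - _).
  set Tm := (X in _ + (X + _) - _).
  set Tk := (X in _ + (_ + X) - _).
  set A0 := (X in _ - (X + _)).
  set Ak := (X in _ - (_ + X)).
  have -> : T0 + (Tm + Tk) - (A0 + Ak) = (T0 - A0) + Tm + (Tk - Ak).
    by ring.
  have [_ hD _] := AlgP_subalg k.+1.
  have -> : Tk - Ak = 0.
    rewrite /Tk /Ak subnn Qs0 mulr_natr -scaler_nat scalerA -natrM subrr //.
  rewrite addr0; apply: hD.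
    rewrite /T0 /A0 bin0 expn0 muln1 subn0 psum0 scale1r mulr_natl -scaler_nat.
    rewrite -scalerA -scalerBr; apply: (subalgZ _ (AlgP_subalg k.+1)).
    by have [_ _] := hf r.
  apply: subalg_sum; first exact: AlgP_subalg.
  move=> i _; apply: (subalgZ _ (AlgP_subalg k.+1)).
  have [_ _ hM] := AlgP_subalg k.+1; apply: hM.
    by apply: AlgP_psum; rewrite /bump /= add1n ltnS ltn_ord.
  apply: mid; first by rewrite /e subSS ltnS leq_subr.
  by rewrite /bump leq0n /= add1n subSS subn_gt0 ltn_ord /= ltnS leq_subr.
have -> : Qs e k.+1 - (e%:R^-1 * \sum_(r < e) c r) *: psum k.+1 =
   e%:R^-1 *: (e%:R * Qs e k.+1 - (\sum_(r < e) c r) *: psum k.+1).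
  by rewrite scalerBr mulr_natl -scaler_nat !scalerA mulVf // scale1r.
exact: (subalgZ _ (AlgP_subalg k.+1)).
Qed.

Lemma psum_in (S : P -> Prop) : subalg S -> (0 < d)%N ->
  (forall k, (0 < k)%N -> S (Qs d k)) -> forall k, (0 < k)%N -> S (psum k).
Proof.
move=> hS d0 hQ; elim/ltn_ind => k IH k0.
have [l [_ lpos hl]] := lam_ex (leqnn d) k.
have hS' : S (Qs d k - l *: psum k).
  by apply: hl => // j /andP[j0 jk]; apply: IH.
have l0 : l != 0 := lt0r_neq0 (lpos d0 k0).
have -> : psum k = l^-1 *: (Qs d k - (Qs d k - l *: psum k)).
  by rewrite opprB addrC subrK scalerA mulVf // scale1r.
by apply: subalgZ => //; apply: subalgB => //; apply: hQ.
Qed.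

Lemma mesym_in (S : P -> Prop) : subalg S ->
  (forall k, (0 < k)%N -> S (psum k)) -> forall k, S (mesym n C k).
Proof.
move=> hS hp; elim/ltn_ind => k IH.
case: k IH => [|k] IH; first by rewrite mesym0E; exact: subalg1.
have hN := newton (fun i : 'I_n => ('X_i : P)) k.
have ek : (k.+1%:R : C) != 0 by rewrite pnatr_eq0.
have -> : mesym n C k.+1 = k.+1%:R^-1 *: (k.+1%:R * es (fun i : 'I_n => ('X_i : P)) k.+1).
  by rewrite mulr_natl -scaler_nat scalerA mulVf // scale1r.
rewrite hN; apply: subalgZ => //; apply: subalg_sum => // i _.
have [_ _ hM] := hS; apply hM; last by apply: hp.
apply hM; first by apply: subalgX => //; apply: subalgN => //; exact: subalg1.
by apply: IH; rewrite ltnS leq_subr.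
Qed.

Lemma sym_in (S : P -> Prop) : subalg S ->
  (forall k, (0 < k)%N -> S (psum k)) -> forall q : P, q \is symmetric -> S q.
Proof.
move=> hS hp q /sym_fundamental [t [<- _]].
apply: subalg_comp => // i; rewrite tnth_map tnth_ord_tuple.
exact: mesym_in.
Qed.

End Core.

Lemma det_pot (R : comRingType) m (A : 'M[R]_m) (phi : 'I_m -> nat) :
  (forall a b, a != b -> A a b != 0 -> (phi a < phi b)%N) ->
  \det A = \prod_a A a a.
Proof.
move=> hA; rewrite /determinant (bigD1 (1%g : 'S_m)) //=; rewrite [X in _ + X]big1 ?addr0 => [|s s1].
  by rewrite odd_perm1 expr0 mul1r; apply eq_bigr => i _; rewrite perm1.
case: (boolP [exists i, A i (s i) == 0]) => [/existsP[i /eqP hi]|].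
  by rewrite (bigD1 i) //= hi mul0r mulr0.
rewrite negb_exists => /forallP hnz.
have le : forall i, (phi i <= phi (s i))%N.
  move=> i; case: (eqVneq i (s i)) => [<-//|ne].
  by rewrite ltnW // hA // hnz.
have [i0 hi0] : exists i0, s i0 != i0.
  apply/existsP; move: s1; apply: contraR; rewrite negb_exists => /forallP h.
  by apply/eqP/permP => i; rewrite perm1; apply/eqP; move/negPn: (h i).
have lt0 : (phi i0 < phi (s i0))%N by rewrite hA // ?hnz // eq_sym.
have : (\sum_i phi i < \sum_i phi (s i))%N.
  rewrite (bigD1 i0) //= [X in (_ < X)%N](bigD1 i0) //=.
  by rewrite -addSn leq_add // leq_sum.
by rewrite (reindex_inj (@perm_inj _ s)) /= ltnn.
Qed.

Lemma coeff_prod (R : idomainType) k (z : 'I_k -> R) (i : 'I_k) :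
  (\prod_(a < k) ('X + (z a)%:P))`_(k - i.+1) = es z i.+1.
Proof.
pose cs := [tuple - z a | a < k].
have -> : \prod_(a < k) ('X + (z a)%:P) = \prod_(c <- cs) ('X - c%:P).
  by rewrite big_tuple; apply eq_bigr => a _; rewrite tnth_mktuple polyCN opprK.
have hi : (i.+1 < k.+1)%N by rewrite ltnS ltn_ord.
rewrite (mroots_coeff cs (Ordinal hi)) /= /mesym.
rewrite rmorph_sum mulr_sumr /es; apply eq_bigr => h /eqP hh.
rewrite rmorph_prod /=.
under eq_bigr => u _ do rewrite mevalXU tnth_mktuple.
by rewrite prodrN hh signrMK.
Qed.

Section Mat.
Variables (C : numClosedFieldType) (n d : nat).
Local Notation Sd_index n d := {mo : 'X_{1..n < d.+1} | (mdeg mo == d)%N}.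
Local Notation UT_index n := {ij : 'I_n * 'I_n | (ij.1 <= ij.2)%N}.
Local Notation N := (UT_dim n).
Local Notation m := (Sd_dim n d).

Definition mo (a : 'I_m) : 'X_{1..n} :=
  (val (@enum_val _ (mem {: Sd_index n d}) a) : 'X_{1..n}).

Lemma Sd_act_delta (i j : 'I_n) (p : {mpoly C[n]}) :
  Sd_act (delta_mx i j) p = 'X_i * p^`M(j).
Proof.
have inner : forall k, \sum_(l < n) delta_mx i j k l *: ('X_k * p^`M(l))
     = (k == i)%:R *: ('X_k * p^`M(j)).
  move=> k; rewrite (bigD1 j) //= big1 ?addr0 => [|l lj]; first by rewrite mxE eqxx andbT.
  by rewrite mxE (negbTE lj) andbF scale0r.
rewrite /Sd_act (eq_bigr _ (fun k _ => inner k)) (bigD1 i) //= big1 ?addr0 => [|k ki].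
  by rewrite eqxx scale1r.
by rewrite (negbTE ki) scale0r.
Qed.

Lemma Sd_mx_delta (i j : 'I_n) a b :
  Sd_mx d (delta_mx i j : 'M[C]_n) a b
   = (mo b j)%:R * (((mo b - U_(j)) + U_(i))%MM == mo a)%:R.
Proof.
rewrite mxE Sd_act_delta mderivX -scalerAr -mpolyXD mcoeffZ mcoeffX addmC.
by [].
Qed.

Definition pot (x : 'X_{1..n}) := (\sum_(l < n) l * x l)%N.

Lemma sum_delta (j : 'I_n) : (\sum_(l < n) l * (j == l))%N = j.
Proof.
rewrite (bigD1 j) //= big1 ?addn0 => [|l lj]; first by rewrite eqxx muln1.
by rewrite eq_sym (negbTE lj) muln0.
Qed.

Lemma pot_shift (x y : 'X_{1..n}) (i j : 'I_n) : (0 < y j)%N ->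
  x = (y - U_(j) + U_(i))%MM -> (pot x + j = pot y + i)%N.
Proof.
move=> yj hx.
have h l : (x l + (j == l) = y l + (i == l))%N.
  rewrite hx mnmDE mnmBE !mnm1E; case: (j =P l) => [<-|_]; last by rewrite subn0 addn0.
  move: yj; case: (i == j); lia.
rewrite /pot -{1}(sum_delta j) -{1}(sum_delta i) -!big_split /=.
by apply eq_bigr => l _; rewrite -!mulnDr h.
Qed.

Lemma mo_inj : injective mo.
Proof.
move=> a b h; apply: enum_val_inj; apply: val_inj; exact: val_inj.
Qed.

Lemma offdiag (i j : 'I_n) a b : (i <= j)%N -> a != b ->
  Sd_mx d (delta_mx i j : 'M[C]_n) a b != 0 -> (pot (mo a) < pot (mo b))%N.
Proof.
move=> ij ab; rewrite Sd_mx_delta.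
case: (posnP (mo b j)) => [->|bj]; first by rewrite mul0r eqxx.
case E: ((mo b - U_(j) + U_(i))%MM == mo a); last by rewrite mulr0 eqxx.
move: E => /eqP hx _.
have hp := pot_shift bj (esym hx).
case: (ltngtP i j) => [lt|gt|eq]; first by lia.
  by move: ij; rewrite leqNgt gt.
have ij' : i = j by apply: val_inj.
move: hx; rewrite ij' submK; last first.
  by apply/mnm_lepP => l; rewrite mnm1E; case: eqP => [<-|]; lia.
by move/mo_inj => e; move: ab; rewrite e eqxx.
Qed.

Lemma diag_entry (i j : 'I_n) a :
  Sd_mx d (delta_mx i j : 'M[C]_n) a a = if i == j then (mo a i)%:R else 0.
Proof.
rewrite Sd_mx_delta.
case: (posnP (mo a j)) => [aj|aj].
  by rewrite aj mul0r; case: eqP => // ->; rewrite aj.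
case: (eqVneq i j) => [->|ij].
  rewrite submK ?eqxx ?mulr1 //.
  by apply/mnm_lepP => l; rewrite mnm1E; case: eqP => [<-|]; lia.

case E: ((mo a - U_(j) + U_(i))%MM == mo a); last by rewrite mulr0.
move/eqP: E => h.
have := congr1 (fun z : 'X_{1..n} => z j) h.
rewrite mnmDE mnmBE !mnm1E eqxx (negbTE ij).
lia.
Qed.

Definition Bk (k : 'I_N) : 'M[C]_m := Sd_mx d (@UT_basis C n k).
Definition Mx : 'M[{mpoly C[N]}]_m :=
  \sum_(k < N) 'X_k *: map_mx (fun c : C => c%:MP) (Bk k).
Definition ek (k : 'I_N) := val (@enum_val _ (mem {: UT_index n}) k).

Lemma Mx_entry a b : Mx a b = \sum_(k < N) 'X_k * (Bk k a b)%:MP.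
Proof. by rewrite summxE; apply eq_bigr => k _; rewrite !mxE. Qed.

Lemma Bk_entry k a b : Bk k a b = Sd_mx d (delta_mx (ek k).1 (ek k).2 : 'M[C]_n) a b.
Proof. by []. Qed.

Lemma charpoly_prod : lie_charpoly Bk = \prod_(a < m) ('X + (Mx a a)%:P).
Proof.
rewrite /lie_charpoly (@det_pot _ _ _ (fun a => pot (mo a))).
  by apply eq_bigr => a _; rewrite !mxE eqxx mulr1n.
move=> a b ab; rewrite !mxE (negbTE ab) mulr0n add0r polyC_eq0 -/Mx Mx_entry => nz.
case: (boolP [exists k, Bk k a b != 0]) => [/existsP[k hk]|].
  move: hk; rewrite Bk_entry; apply: offdiag => //.
  exact: (valP (@enum_val _ (mem {: UT_index n}) k)).
move/existsPn => h; move: nz; rewrite big1 ?eqxx // => k _.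
by have := h k; rewrite negbK => /eqP ->; rewrite mpolyC0 mulr0.
Qed.

Definition Dt : n.-tuple {mpoly C[N]} := [tuple UT_diagvar C i | i < n].
Definition diagu (i : 'I_n) : UT_index n :=
  exist (fun ij : 'I_n * 'I_n => (ij.1 <= ij.2)%N) (i, i) (leqnn i).

Lemma Mx_diag a : Mx a a = lin C (mo a) \mPo Dt.
Proof.
rewrite Mx_entry /lin raddf_sum /=.
under [RHS]eq_bigr => i _ do rewrite comp_mpolyZ comp_mpolyXU -tnth_nth tnth_mktuple.
pose F (u : UT_index n) : {mpoly C[N]} :=
  'X_(enum_rank u) * (Sd_mx d (delta_mx (val u).1 (val u).2 : 'M[C]_n) a a)%:MP.
rewrite (eq_bigr (fun k => F (enum_val k))); last first.
  by move=> k _; rewrite /F enum_valK Bk_entry.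
rewrite -(big_enum_val F) /=.
rewrite (bigID (fun u : UT_index n => (val u).1 == (val u).2)) /=.
rewrite [X in _ + X]big1 ?addr0 => [|u /negbTE nd]; last first.
  by rewrite /F diag_entry nd mpolyC0 mulr0.
rewrite (reindex_onto diagu (fun u : UT_index n => (val u).1)) /=; last first.
  move=> [[x y] pf] /= /eqP exy; apply: val_inj => /=.
  by rewrite exy.
apply: eq_big => [i|i _]; first by rewrite !eqxx.
by rewrite /F /= diag_entry eqxx mulrC mul_mpolyC.
Qed.

End Mat.

Lemma es_perm (R : comRingType) k (x : 'I_k -> R) (pi : 'I_k -> 'I_k) j :
  injective pi -> es (fun a => x (pi a)) j = es x j.
Proof.
move=> ipi; rewrite /es [RHS](reindex_inj (imset_inj ipi)) /=.
apply: eq_big => [h|h _]; first by rewrite card_imset.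
by rewrite big_imset //= => u v _ _; apply: ipi.
Qed.

Lemma es_map (R S : comRingType) (f : {rmorphism R -> S}) k (x : 'I_k -> R) j :
  f (es x j) = es (fun a => f (x a)) j.
Proof. by rewrite /es rmorph_sum; apply eq_bigr => h _; rewrite rmorph_prod. Qed.

Section Sym.
Variables (C : numClosedFieldType) (n d : nat).
Local Notation Sd_index n d := {mo : 'X_{1..n < d.+1} | (mdeg mo == d)%N}.
Local Notation m := (Sd_dim n d).

Definition y0 (a : 'I_m) : {mpoly C[n]} := lin C (mo a).

Lemma msymXU (s : 'S_n) (l : 'I_n) : msym s ('X_l : {mpoly C[n]}) = 'X_(s l).
Proof. by rewrite /msym mmapX mmap1U. Qed.

Definition mp (s : 'S_n) (x : 'X_{1..n}) : 'X_{1..n} := [multinom x ((s^-1)%g i) | i < n].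

Lemma msym_lin s x : msym s (lin C x) = lin C (mp s x).
Proof.
rewrite /lin raddf_sum /= [RHS](reindex_inj (@perm_inj _ s)) /=.
by apply eq_bigr => l _; rewrite msymZ msymXU mnmE permK.
Qed.

Lemma mdeg_mp s x : mdeg (mp s x) = mdeg x.
Proof. exact: mdeg_mperm. Qed.

Lemma sperm_p1 s (b : Sd_index n d) : (mdeg (mp s (val b)) < d.+1)%N.
Proof. by rewrite mdeg_mp bmdeg. Qed.

Lemma sperm_p2 s (b : Sd_index n d) : (mdeg (BMultinom (sperm_p1 s b)) == d)%N.
Proof. by rewrite /= mdeg_mp (valP b). Qed.

Definition sperm s (b : Sd_index n d) : Sd_index n d :=
  exist (fun mo : 'X_{1..n < d.+1} => (mdeg mo == d)%N) (BMultinom (sperm_p1 s b)) (sperm_p2 s b).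

Lemma sperm_inj s : injective (sperm s).
Proof.
move=> b1 b2 h; apply: val_inj; apply: val_inj.
have := congr1 (fun z : Sd_index n d => (val (val z) : 'X_{1..n})) h => /= e.
apply/mnmP => i; have := congr1 (fun z : 'X_{1..n} => z (s i)) e.
by rewrite /= !mnmE permK.
Qed.

Definition pi (s : 'S_n) (a : 'I_m) : 'I_m :=
  @enum_rank_in _ (enum_val a) (mem {: Sd_index n d}) (enum_valP a) (sperm s (enum_val a)).

Lemma es_sym j : es y0 j \is symmetric.
Proof.
apply/issymP => s.
have hv : forall a, enum_val (pi s a) = sperm s (enum_val a).
  by move=> a; rewrite /pi enum_rankK_in.
have ipi : injective (pi s).
  move=> a1 a2 h; apply: enum_val_inj; apply: (@sperm_inj s).
  by rewrite -!hv h.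
rewrite (es_map (msym s)) -[RHS](es_perm _ _ ipi); apply: eq_bigr => h _.
apply: eq_bigr => u _; rewrite /y0 /= msym_lin /mo hv.
by [].
Qed.

End Sym.

Section Final.
Variables (C : numClosedFieldType) (n d : nat).
Local Notation Sd_index n d := {mo : 'X_{1..n < d.+1} | (mdeg mo == d)%N}.
Local Notation m := (Sd_dim n d).

Definition Et : m.-tuple {mpoly C[n]} := [tuple es (@y0 C n d) i.+1 | i < m].

Lemma Qs_pw k : Qs C n d d k = pw (@y0 C n d) k.
Proof.
rewrite /pw /y0 /mo.
rewrite -(big_enum_val (fun s : Sd_index n d => lin C (val s : 'X_{1..n}) ^+ k)) /=.
rewrite /Qs (reindex_omap (val : Sd_index n d -> 'X_{1..n < d.+1}) insub); last first.
  by move=> b hb; rewrite insubT.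
apply: eq_big => [s|s _] //=.
by rewrite (valP s) valK eqxx.
Qed.

Lemma es_in j : genalg Et (es (@y0 C n d) j).
Proof.
case: j => [|j].
  rewrite /es (big_pred1 set0) => [|h]; last by rewrite cards_eq0.
  by rewrite big_set0 -mpolyC1; case: (genalg_subalg Et).
case: (ltnP j m) => jm.
  by have := genalg_gen Et (Ordinal jm); rewrite tnth_mktuple.
rewrite /es big_pred0 => [|h]; last first.
  apply/negbTE; rewrite neq_ltn; apply/orP; left.
  by rewrite ltnS (leq_trans (max_card _)) // card_ord.
exact: subalg0 (genalg_subalg Et).
Qed.

Lemma es0 (R : comRingType) k (x : 'I_k -> R) : es x 0 = 1.
Proof.
rewrite /es (big_pred1 set0) => [|h]; last by rewrite cards_eq0.
by rewrite big_set0.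
Qed.

Lemma pw_in k : genalg Et (pw (@y0 C n d) k.+1).
Proof.
have hS := genalg_subalg Et.
elim/ltn_ind: k => k IH.
have hN := newton (@y0 C n d) k.
rewrite big_ord_recr /= subnn es0 mulr1 in hN.
have -> : pw (@y0 C n d) k.+1 = (-1) ^+ k * (k.+1%:R * es (@y0 C n d) k.+1
   - \sum_(i < k) (-1) ^+ i * es (@y0 C n d) (k - i)%N * pw (@y0 C n d) i.+1).
  by rewrite hN addrAC subrr add0r signrMK.
have [_ _ hM] := hS.
apply hM; first by apply: subalgX => //; apply: subalgN => //; exact: subalg1.
apply: subalgB => //.
  apply hM; last exact: es_in.
  by rewrite -mpolyC_nat; case: hS.
apply: subalg_sum => // i _; apply hM; last by apply: IH.
apply hM; last exact: es_in.
by apply: subalgX => //; apply: subalgN => //; exact: subalg1.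
Qed.

End Final.

Lemma comp_phi (K : comRingType) n N k (t : k.-tuple {mpoly K[n]})
   (P : {mpoly K[k]}) (D : n.-tuple {mpoly K[N]}) :
  P \mPo [tuple (tnth t i) \mPo D | i < k] = (P \mPo t) \mPo D.
Proof.
rewrite [LHS]comp_mpolyE (comp_mpolyE P t) raddf_sum /=; apply eq_bigr => mm _.
rewrite linearZ /= rmorph_prod; congr (_ *: _); apply eq_bigr => i _.
by rewrite tnth_mktuple rmorphXn.
Qed.

Lemma lie_coeffs_eq (C : numClosedFieldType) n d :
  lie_coeffs (fun k => Sd_mx d (@UT_basis C n k))
  = [tuple (tnth (Et C n d) i) \mPo Dt C n | i < Sd_dim n d].
Proof.
apply: eq_from_tnth => i; rewrite !tnth_mktuple.
rewrite (_ : lie_charpoly _ = lie_charpoly (Bk C (n:=n) d)) //.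
rewrite charpoly_prod coeff_prod (es_map (comp_mpoly (Dt C n))).
by apply: eq_bigr => h _; apply: eq_bigr => u _; rewrite Mx_diag.
Qed.

Theorem theorem1p1 (C : numClosedFieldType) (n d : nat) :
  (2 <= n)%N -> (1 <= d)%N ->
  forall p : {mpoly C[UT_dim n]},
    coeff_algebra (fun k => Sd_mx d (@UT_basis C n k)) p <-> sym_diag p.
Proof.
move=> n2 d1 p; split.
- case=> P ->; rewrite lie_coeffs_eq comp_phi.
  exists (P \mPo Et C n d); split => //.
  apply: mcomp_sym => i; rewrite -tnth_nth tnth_mktuple; exact: es_sym.
- case=> q [qs ->].
  have [P hP] : genalg (Et C n d) q.
    apply: (sym_in (genalg_subalg _)) qs => k k0.
    apply: (psum_in (genalg_subalg _) d1) k0 => j j0.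
    rewrite Qs_pw; case: j j0 => // j _; exact: pw_in.
  by exists P; rewrite lie_coeffs_eq comp_phi -hP.
Qed.
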